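(* Suppose $\|\widehat\theta_t-\theta^*\|_{\Sigma_t}\le\beta_t$ for all $t\in[T]$ (with $\|\theta^*\|_2\le L_\theta$). Then for each episode $k$ of \texttt{UCMNLK} and all $(s,a)\in\mathcal S\times\mathcal A$: $1/(1-\gamma)\ge V_k(s)\ge V^*(s)$ and $1/(1-\gamma)\ge Q_k(s,a)\ge Q^*(s,a)$.
   Context: Setting as for \texttt{UCMNLK}: finite $\mathcal S,\mathcal A$, reward $r\in[0,1]$, true transitions $p(s'\mid s,a,\theta^* )$ of MNL form $p(s'\mid s,a,\theta)=\exp(\varphi(s,a,s')^\top\theta)/\sum_{s''\in\mathcal S_{s,a}}\exp(\varphi(s,a,s'')^\top\theta)$ on known reachable sets $\mathcal S_{s,a}$. $\widehat\theta_t,\Sigma_t$ are the online estimator's iterates; $\mathcal P_t$ is the set of $p\in[0,1]^{\mathcal S\times\mathcal A\times\mathcal S}$ with $\sum_{s'\in\mathcal S_{s,a}}p_{s,a,s'}=1$ and $\sum_{s'\in\mathcal S_{s,a}}|p_{s,a,s'}-p(s'\mid s,a,\widehat\theta_t)|\le\beta_t\sum_{s'}p(s'\mid s,a,\widehat\theta_t)\|\varphi(s,a,s')-\sum_{s''}p(s''\mid s,a,\widehat\theta_t)\varphi(s,a,s'')\|_{\Sigma_t^{-1}}+3\beta_t^2\max_{s'}\|\varphi(s,a,s')\|^2_{\Sigma_t^{-1}}$ for all $(s,a)$. For episode $k$ starting at $t_k$, $Q_k$ is the output of \texttt{DEVI}$(\gamma,\mathcal P_{t_k},N)$: $Q^{(0)}\equiv1/(1-\gamma)$,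 $V^{(n-1)}(s)=\max_aQ^{(n-1)}(s,a)$, $Q^{(n)}(s,a)=r(s,a)+\gamma\max_{p\in\mathcal P_{t_k}}\sum_{s'\in\mathcal S_{s,a}}p_{s,a,s'}V^{(n-1)}(s')$, $Q_k=Q^{(N)}$; $V_k(s)=\max_aQ_k(s,a)$. $V^*,Q^*$ are the optimal value and action-value functions of the discounted MDP with discount $\gamma$ under the true transitions, satisfying $Q^*(s,a)=r(s,a)+\gamma\sum_{s'}p(s'\mid s,a,\theta^* )V^*(s')$, $V^*(s)=\max_aQ^*(s,a)$. *)

(* Defs.v *)
From HB Require Import structures.
From mathcomp Require Import all_boot all_order all_algebra.
From mathcomp Require Import all_classical all_reals all_analysis.
Set Implicit Arguments. Unset Strict Implicit. Unset Printing Implicit Defensive.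
Import Order.TTheory GRing.Theory Num.Theory.
Local Open Scope ring_scope.
Local Open Scope classical_set_scope.

Section UCMNLK.
Variables (R : realType) (S A : finType) (d : nat).

Definition ip (x y : 'cV[R]_d) : R := (x^T *m y) 0 0.

Definition wnorm (M : 'M[R]_d) (x : 'cV[R]_d) : R := Num.sqrt ((x^T *m M *m x) 0 0).

Definition posdef (M : 'M[R]_d) : Prop :=
  M^T = M /\ forall x : 'cV[R]_d, x != 0 -> 0 < (x^T *m M *m x) 0 0.

Variables (phi : S -> A -> S -> 'cV[R]_d) (Sr : S -> A -> {set S}).

Definition mnl (theta : 'cV[R]_d) (s : S) (a : A) (s' : S) : R :=
  if s' \in Sr s a then
    expR (ip (phi s a s') theta) /
    \sum_(s'' in Sr s a) expR (ip (phi s a s'') theta)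
  else 0.

Definition conf_set (thetahat : 'cV[R]_d) (Sigma : 'M[R]_d) (beta : R)
  : set (S -> A -> S -> R) :=
  [set p | (forall s a s', 0 <= p s a s' <= 1) /\
    forall s a,
      \sum_(s' in Sr s a) p s a s' = 1 /\
      \sum_(s' in Sr s a) `|p s a s' - mnl thetahat s a s'|
      <= beta * \sum_(s' in Sr s a) mnl thetahat s a s' *
                 wnorm (invmx Sigma)
                   (phi s a s' - \sum_(s'' in Sr s a) mnl thetahat s a s'' *: phi s a s'')
         + 3 * beta ^+ 2 *
           \big[Num.max/0]_(s' in Sr s a) (wnorm (invmx Sigma) (phi s a s')) ^+ 2].

(* max over actions (A nonempty, witnessed by a0) *)
Definition vmax (a0 : A) (Q : S -> A -> R) (s : S) : R :=
  \big[Num.max/Q s a0]_(a : A) Q s a.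

Fixpoint devi (a0 : A) (r : S -> A -> R) (gamma : R) (P : set (S -> A -> S -> R))
  (n : nat) : S -> A -> R :=
  match n with
  | 0 => fun _ _ => (1 - gamma)^-1
  | n'.+1 => fun s a =>
      r s a + gamma *
        sup [set x | exists2 p, P p &
               x = \sum_(s' in Sr s a) p s a s' * vmax a0 (devi a0 r gamma P n') s']
  end.

End UCMNLK.

(* Main.v *)
Require Import Defs.
From HB Require Import structures.
From mathcomp Require Import all_boot all_order all_algebra.
From mathcomp Require Import all_classical all_reals all_analysis.
From mathcomp Require Import ring lra.
Import Order.TTheory GRing.Theory Num.Theory.
Local Open Scope ring_scope.


Section S.
Variable R : realType.

Lemma exp_ub (u : R) : u < 2 -> expR u <= 4 / (2 - u) ^+ 2.
Proof.
move=> hu.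
have h1 : 1 - u / 2 <= expR (- (u / 2)) by have := expR_ge1Dx (- (u/2)); lra.
have hp : 0 < 1 - u / 2 by lra.
have hm := expRxMexpNx_1 (u/2).
have he := expR_gt0 (u/2).
have h2 : expR (u/2) * (1 - u/2) <= 1.
  by rewrite -[X in _ <= X]hm ler_pM2l.
have -> : expR u = expR (u/2) ^+ 2.
  by rewrite -expRM_natr; congr expR; field.
have hq : 0 < (2 - u) ^+ 2 by rewrite exprn_gt0 //; lra.
rewrite ler_pdivlMr //.
have -> : expR (u / 2) ^+ 2 * (2 - u) ^+ 2 = 4 * (expR (u/2) * (1 - u/2)) ^+ 2.
  by field.
have h3 : 0 <= expR (u/2) * (1 - u/2) by apply: mulr_ge0; lra.
nra.
Qed.

Lemma lemP (a u : R) : 0 <= a -> 3 * a ^+ 2 < 2 -> u <= 2 * a ->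
  (1 - 3/2 * a ^+ 2) * expR u <= (1 - 3/2 * a ^+ 2) * (1 + u) + 3/2 * u ^+ 2.
Proof.
move=> ha h3 hu.
have a56 : a < 5/6 by nra.
have hu2 : u < 2 by lra.
set c := 1 - 3/2 * a ^+ 2.
have hc : 0 < c by rewrite /c; lra.
apply: (le_trans (y := c * (4 / (2 - u) ^+ 2))).
  by rewrite ler_pM2l // exp_ub.
have h2 : 0 < (2 - u) ^+ 2 by rewrite exprn_gt0 //; lra.
rewrite mulrA ler_pdivrMr //.
have g2a : 0 <= 3 - 10 * a + 21/2 * a ^+ 2 - 3 * a ^+ 3.
  have -> : 3 - 10 * a + 21/2 * a ^+ 2 - 3 * a ^+ 3 =
     1/9 + (a - 2/3)^+2 * (9/2 - 3 * (a - 2/3)) by rewrite /=; field.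
  apply: addr_ge0; first by lra.
  apply: mulr_ge0; first by apply: sqr_ge0.
  lra.
have g : 0 <= 3/2 * (2 - u) ^+ 2 - c * (3 - u).
  have -> : 3/2 * (2 - u) ^+ 2 - c * (3 - u) =
    (3 - 10 * a + 21/2 * a ^+ 2 - 3 * a ^+ 3) + (2 * a - u) * (6 - c - 3/2 * (u + 2 * a)).
    by rewrite /c; field.
  apply: addr_ge0 => //; apply: mulr_ge0; rewrite /c; nra.
rewrite -subr_ge0.
have -> : (c * (1 + u) + 3 / 2 * u ^+ 2) * (2 - u) ^+ 2 - c * 4 =
   u ^+ 2 * (3/2 * (2 - u) ^+ 2 - c * (3 - u)) by rewrite /c; field.
by apply: mulr_ge0 => //; apply: sqr_ge0.
Qed.

Lemma pointwise (q u w : R) : 0 <= q -> 0 < w -> w <= 1 ->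
  `|q * expR u * w - q| <= (q * expR u * w - q) + 2 * q * (1 - w) + q * (`|u| - u).
Proof.
move=> hq hw0 hw1.
have he : q * (1 + u) * w <= q * expR u * w.
  by apply: ler_wpM2r; [exact: ltW|apply: ler_wpM2l => //; exact: expR_ge1Dx].
have hqw : 0 <= q * w by apply: mulr_ge0 => //; apply: ltW.
have k1 : 0 <= q * (1 - w) by apply: mulr_ge0; lra.
case: (lerP 0 u) => hu.
  rewrite (ger0_norm hu).
  have : 0 <= q * w * u by apply: mulr_ge0.
  case: (lerP 0 (q * expR u * w - q)) => h; first by rewrite (ger0_norm h); nra.
  rewrite (ltr0_norm h); nra.
rewrite (ltr0_norm hu).
have k2 : q * w * (- u) <= q * (- u).
  have hnu : 0 <= - u by lra.
  have h1w : 0 <= 1 - w by lra.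
  have := mulr_ge0 (mulr_ge0 hq hnu) h1w; nra.
case: (lerP 0 (q * expR u * w - q)) => h.
  rewrite (ger0_norm h); have : 0 <= q * (- u) by apply: mulr_ge0; lra. nra.
rewrite (ltr0_norm h); nra.
Qed.

Lemma core (I : finType) (J : {set I}) (q u : I -> R) (A : R) :
  (forall i, i \in J -> 0 <= q i) -> \sum_(i in J) q i = 1 ->
  \sum_(i in J) q i * u i = 0 ->
  \sum_(i in J) q i * u i ^+ 2 <= A -> 0 <= A ->
  (forall i, i \in J -> u i <= 2 * Num.sqrt A) ->
  \sum_(i in J) `| q i * expR (u i) / (\sum_(j in J) q j * expR (u j)) - q i |
    <= \sum_(i in J) q i * `|u i| + 3 * A.
Proof.
move=> hq hq1 hu0 hu2 hA hub.
set Z := \sum_(j in J) q j * expR (u j).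
have hZ1 : 1 <= Z.
  rewrite -hq1 -[X in X <= _]addr0 -[X in _ + X <= _]hu0 -big_split /=.
  apply: ler_sum => i hi; rewrite -[X in X + _ <= _]mulr1 -mulrDr ler_wpM2l ?hq //.
  by rewrite expR_ge1Dx.
have hZ0 : 0 < Z by lra.
have hw0 : 0 < Z^-1 by rewrite invr_gt0.
have hw1 : Z^-1 <= 1 by rewrite invf_le1.
have C : 1 - Z^-1 <= 3/2 * A.
  case: (ltrP (3 * A) 2) => h3; last by lra.
  set a := Num.sqrt A.
  have ha : 0 <= a by apply: sqrtr_ge0.
  have haA : a ^+ 2 = A by rewrite sqr_sqrtr.
  have cZ : (1 - 3/2 * A) * Z <= 1.
    rewrite /Z mulr_sumr.
    apply: (le_trans (y := \sum_(i in J) q i * ((1 - 3/2 * A) * (1 + u i) + 3/2 * u i ^+ 2))).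
      apply: ler_sum => i hi; rewrite mulrCA ler_wpM2l ?hq // -haA.
      apply: lemP => //; first by rewrite haA.
      exact: hub.
    rewrite (eq_bigr (fun i => (1 - 3/2 * A) * q i + (1 - 3/2 * A) * (q i * u i)
        + 3/2 * (q i * u i ^+ 2))); last by move=> i _; ring.
    rewrite !big_split /= -!mulr_sumr hq1 hu0.
    have : 3 / 2 * \sum_(i in J) q i * u i ^+ 2 <= 3/2 * A by rewrite ler_wpM2l //.
    lra.
  have : Z - 1 <= 3/2 * A * Z by nra.
  move=> h; have := h.
  rewrite -(ler_pM2r hZ0) in h.
  have -> : 1 - Z^-1 = (Z - 1) / Z by field; lra.
  rewrite ler_pdivrMr //.
have P : forall i, i \in J -> `| q i * expR (u i) / Z - q i | <=
   (q i * expR (u i) / Z - q i) + 2 * q i * (1 - Z^-1) + q i * (`|u i| - u i).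
  by move=> i hi; apply: pointwise => //; apply: hq.
apply: (le_trans (ler_sum _ P)).
rewrite (eq_bigr (fun i => Z^-1 * (q i * expR (u i)) - q i + (2 * (1 - Z^-1)) * q i
   + q i * `|u i| - q i * u i)); last by move=> i _; rewrite /=; ring.
rewrite sumrB big_split /= big_split /= sumrB -!mulr_sumr hq1 hu0 -/Z mulVf ?gt_eqF //.
lra.
Qed.
End S.

Section S2.
Variable R : realType.

Lemma core2 (I : finType) (J : {set I}) (q z : I -> R) (A : R) :
  (forall i, i \in J -> 0 <= q i) -> \sum_(i in J) q i = 1 -> 0 <= A ->
  (forall i, i \in J -> z i ^+ 2 <= A) ->
  \sum_(i in J) `| q i * expR (z i) / (\sum_(j in J) q j * expR (z j)) - q i |
    <= \sum_(i in J) q i * `|z i - \sum_(j in J) q j * z j| + 3 * A.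
Proof.
move=> hq hq1 hA hz.
set m := \sum_(j in J) q j * z j.
have hza : forall i, i \in J -> `|z i| <= Num.sqrt A.
  by move=> i hi; rewrite -sqrtr_sqr ler_wsqrtr // hz.
have hm : `|m| <= Num.sqrt A.
  apply: (le_trans (ler_norm_sum _ _ _)).
  apply: (le_trans (y := \sum_(j in J) q j * Num.sqrt A)).
    apply: ler_sum => j hj; rewrite normrM (ger0_norm (hq j hj)).
    by rewrite ler_wpM2l ?hq ?hza.
  by rewrite -mulr_suml hq1 mul1r.
have E : forall i, i \in J -> q i * expR (z i) / (\sum_(j in J) q j * expR (z j)) =
   q i * expR (z i - m) / (\sum_(j in J) q j * expR (z j - m)).
  move=> i hi.
  under [X in _ = _ / X]eq_bigr do rewrite expRD mulrA.
  rewrite -mulr_suml expRD mulrA.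
  have : 0 < expR (- m) by apply: expR_gt0.
  set e := expR (- m) => he.
  rewrite invfM.
  have -> : forall a c : R, a * e * (c * e^-1) = a * c * (e / e).
    by move=> a c; ring.
  by rewrite mulfV ?gt_eqF // mulr1.
rewrite (eq_bigr (fun i => `| q i * expR (z i - m) / (\sum_(j in J) q j * expR (z j - m)) - q i |)); last first.
  by move=> i hi; rewrite E.
apply: core => //.
- rewrite (eq_bigr (fun i => q i * z i - m * q i)); last by move=> i _; ring.
  by rewrite sumrB -mulr_sumr hq1 mulr1 subrr.
- rewrite (eq_bigr (fun i => q i * z i ^+ 2 - 2 * m * (q i * z i) + m ^+ 2 * q i)); last by move=> i _; ring.
  rewrite big_split sumrB /= -!mulr_sumr hq1 -/m.
  apply: (le_trans (y := \sum_(i in J) q i * z i ^+ 2)); last first.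
    apply: (le_trans (y := \sum_(i in J) q i * A)).
      by apply: ler_sum => i hi; rewrite ler_wpM2l ?hq ?hz.
    by rewrite -mulr_suml hq1 mul1r.
  have : 0 <= m ^+ 2 by apply: sqr_ge0.
  lra.
- move=> i hi.
  have := hza i hi; have := hm.
  have := ler_norm (z i).
  have : - m <= `|m| by rewrite -normrN ler_norm.
  lra.
Qed.
End S2.

Section S3.
Variable R : realType.

Lemma posdef_unit d (M : 'M[R]_d) : posdef M -> M \in unitmx.
Proof.
move=> [hs hp]; rewrite unitmxE unitfE; apply/negP => /det0P [v hv hvM].
have := hp v^T; rewrite trmx_eq0 hv trmxK hvM mul0mx mxE => /(_ isT).
by rewrite ltxx.
Qed.

Lemma cs d (M : 'M[R]_d) (x y : 'cV[R]_d) : posdef M ->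
  `|ip x y| <= wnorm (invmx M) x * wnorm M y.
Proof.
move=> hM; have hU := @posdef_unit d M hM; case: hM => hs hp.
pose b (u v : 'cV[R]_d) := (u^T *m M *m v) 0 0.
have bge : forall u, 0 <= b u u.
  move=> u; case: (eqVneq u 0) => [->|hu]; last exact: ltW (hp u hu).
  by rewrite /b mulmx0 mxE.
have bsym : forall u v, b u v = b v u.
  have tr : forall A : 'M[R]_1, A 0 0 = A^T 0 0 by move=> A; rewrite mxE.
  by move=> u v; rewrite /b [LHS]tr !trmx_mul trmxK hs mulmxA.
set xt := invmx M *m x.
have hxt : xt^T *m M = x^T.
  by rewrite /xt trmx_mul trmx_inv hs -mulmxA mulVmx // mulmx1.
have e1 : b xt xt = (x^T *m invmx M *m x) 0 0 by rewrite /b hxt mulmxA.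
have e2 : b xt y = ip x y by rewrite /b hxt.
have quad : forall t, 0 <= b xt xt - 2 * t * b xt y + t ^+ 2 * b y y.
  move=> t; have := bge (xt - t *: y).
  have -> : b (xt - t *: y) (xt - t *: y) = b xt xt - t * b y xt - t * b xt y + t ^+ 2 * b y y.
    have htr : (xt - t *: y)^T = xt^T - t *: y^T by apply/matrixP => i j; rewrite !mxE.
    rewrite /b htr !mulmxBl !mulmxBr -!scalemxAl -!scalemxAr !scalerA !mxE.
    ring.
  by rewrite (bsym y xt); move=> h; lra.
rewrite /wnorm -e1 -e2 -sqrtrM ?bge // -sqrtr_sqr ler_wsqrtr //.
case: (eqVneq y 0) => [hy0|hy].
  have -> : b xt y = 0 by rewrite /b hy0 mulmx0 mxE.
  by rewrite expr0n /=; apply: mulr_ge0; apply: bge.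
have hC : 0 < b y y by apply: hp.
have h := quad (b xt y / b y y).
move: h hC; set B := b xt y; set C := b y y; set al := b xt xt => h hC.
have E : al - 2 * (B / C) * B + (B / C) ^+ 2 * C = (al * C - B ^+ 2) / C.
  by field; rewrite gt_eqF.
move: h; rewrite E pmulr_lge0 ?invr_gt0 // subr_ge0 mulrC //.
Qed.
End S3.

Section S4.
Variables (R : realType) (S A : finType) (d : nat).
Variables (phi : S -> A -> S -> 'cV[R]_d) (Sr : S -> A -> {set S}).

Lemma ipE (x v : 'cV[R]_d) : ip x v = \sum_k x k 0 * v k 0.
Proof. by rewrite /ip mxE; apply: eq_bigr => k _; rewrite mxE. Qed.

Lemma ip_subr (x y z : 'cV[R]_d) : ip x (y - z) = ip x y - ip x z.
Proof.
rewrite !ipE -sumrB; apply: eq_bigr => k _; rewrite !mxE; ring.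
Qed.

Lemma ip_lin1 (x : 'cV[R]_d) (J : {set S}) (c : S -> R) (f : S -> 'cV[R]_d) v :
  ip (x - \sum_(j in J) c j *: f j) v = ip x v - \sum_(j in J) c j * ip (f j) v.
Proof.
rewrite !ipE.
under eq_bigr do rewrite !mxE summxE mulrBl.
rewrite sumrB; congr (_ - _).
under [in RHS]eq_bigr do rewrite ipE.
transitivity (\sum_i \sum_(k in J) c k * (f k i 0 * v i 0)).
  apply: eq_bigr => i _; rewrite big_distrl /=; apply: eq_bigr => k _; rewrite mxE; ring.
rewrite exchange_big /=; apply: eq_bigr => j _.
by rewrite big_distrr.
Qed.

Lemma sum_e_gt0 (J : {set S}) (g : S -> R) : (0 < #|J|)%N ->
  0 < \sum_(j in J) expR (g j).
Proof.
rewrite card_gt0 => /set0Pn [i hi].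
rewrite (bigD1 i) //=; apply: ltr_pwDl; first exact: expR_gt0.
by apply: sumr_ge0 => j _; apply: expR_ge0.
Qed.

Lemma mnl_ge0 th s a s' : 0 <= mnl phi Sr th s a s'.
Proof.
rewrite /mnl; case: ifP => // _; apply: divr_ge0; first exact: expR_ge0.
by apply: sumr_ge0 => j _; apply: expR_ge0.
Qed.

Lemma mnl_le1 th s a s' : mnl phi Sr th s a s' <= 1.
Proof.
rewrite /mnl; case: ifP => // hi.
have hp : 0 < \sum_(s'' in Sr s a) expR (ip (phi s a s'') th).
  by apply: sum_e_gt0; rewrite card_gt0; apply/set0Pn; exists s'.
rewrite ler_pdivrMr // mul1r (bigD1 s') //= lerDl.
by apply: sumr_ge0 => j _; apply: expR_ge0.
Qed.

Lemma mnl_sum1 th s a : (0 < #|Sr s a|)%N ->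
  \sum_(s' in Sr s a) mnl phi Sr th s a s' = 1.
Proof.
move=> hc.
have hp := @sum_e_gt0 (Sr s a) (fun s'' => ip (phi s a s'') th) hc.
rewrite (eq_bigr (fun s' => expR (ip (phi s a s') th) /
    \sum_(s'' in Sr s a) expR (ip (phi s a s'') th))); last first.
  by move=> i hi; rewrite /mnl hi.
by rewrite -mulr_suml mulfV ?gt_eqF.
Qed.

Lemma mnl_sum_all th s a (f : S -> R) :
  \sum_(s' : S) mnl phi Sr th s a s' * f s' = \sum_(s' in Sr s a) mnl phi Sr th s a s' * f s'.
Proof.
rewrite (bigID (fun s' => s' \in Sr s a)) /= addrC big1 ?add0r //.
by move=> i /negbTE hi; rewrite /mnl hi mul0r.
Qed.

End S4.

Section S5.
Variables (R : realType) (S A : finType) (d : nat).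
Variables (phi : S -> A -> S -> 'cV[R]_d) (Sr : S -> A -> {set S}).

Lemma wnormN (M : 'M[R]_d) (v : 'cV[R]_d) : wnorm M (- v) = wnorm M v.
Proof.
rewrite /wnorm; congr Num.sqrt.
have -> : (- v)^T = - v^T by apply/matrixP => i j; rewrite !mxE.
by rewrite mulNmx mulNmx mulmxN opprK.
Qed.

Lemma mnl_in_conf (th ts : 'cV[R]_d) (M : 'M[R]_d) (beta : R) :
  (forall s a, (0 < #|Sr s a|)%N) -> posdef M -> wnorm M (th - ts) <= beta ->
  conf_set phi Sr th M beta (mnl phi Sr ts).
Proof.
move=> hc hM hb; split.
  by move=> s a s'; apply/andP; split; [apply: mnl_ge0|apply: mnl_le1].
move=> s a; split; first exact: mnl_sum1.
have hw : wnorm M (ts - th) <= beta by rewrite -opprB wnormN.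
have hb0 : 0 <= beta by apply: le_trans hb; apply: sqrtr_ge0.
set J := Sr s a.
set q := fun s' => mnl phi Sr th s a s'.
set z := fun s' => ip (phi s a s') ts - ip (phi s a s') th.
set Mx := \big[Num.max/0]_(s' in J) wnorm (invmx M) (phi s a s') ^+ 2.
have hzip : forall s', z s' = ip (phi s a s') (ts - th) by move=> s'; rewrite /z ip_subr.
have hz : forall i, i \in J -> z i ^+ 2 <= beta ^+ 2 * Mx.
  move=> i hi.
  have h1 : `|z i| <= wnorm (invmx M) (phi s a i) * beta.
    rewrite hzip; apply: (le_trans (cs _ _ _ _ _ hM)).
    by rewrite ler_wpM2l // sqrtr_ge0.
  have h2 : wnorm (invmx M) (phi s a i) ^+ 2 <= Mx.
    by rewrite /Mx; apply: (le_bigmax_cond _ (fun s0 => wnorm (invmx M) (phi s a s0) ^+ 2) hi).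
  rewrite -real_normK ?num_real //.
  apply: (le_trans (y := (wnorm (invmx M) (phi s a i) * beta) ^+ 2)).
    by rewrite lerXn2r ?nnegrE ?normr_ge0 //; apply: mulr_ge0 => //; apply: sqrtr_ge0.
  rewrite exprMn mulrC ler_wpM2l //; exact: sqr_ge0.
have hSt := @sum_e_gt0 R S J (fun s'' => ip (phi s a s'') ts) (hc s a).
have hSh := @sum_e_gt0 R S J (fun s'' => ip (phi s a s'') th) (hc s a).
set St := \sum_(j in J) expR (ip (phi s a j) ts) in hSt.
set Sh := \sum_(j in J) expR (ip (phi s a j) th) in hSh.
have hqe : forall j, j \in J -> q j * expR (z j) = expR (ip (phi s a j) ts) / Sh.
  move=> j hj; rewrite /q /mnl -/J hj -/Sh /z expRB.
  have := expR_gt0 (ip (phi s a j) th); move=> he.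
  by field; rewrite !gt_eqF.
have hZ : \sum_(j in J) q j * expR (z j) = St / Sh.
  by rewrite (eq_bigr _ hqe) -mulr_suml.
have E : forall i, i \in J -> mnl phi Sr ts s a i = q i * expR (z i) / (\sum_(j in J) q j * expR (z j)).
  move=> i hi; rewrite hZ hqe // /mnl -/J hi -/St.
  by field; rewrite !gt_eqF.
rewrite (eq_bigr (fun i => `| q i * expR (z i) / (\sum_(j in J) q j * expR (z j)) - q i |)); last first.
  by move=> i hi; rewrite E.
apply: le_trans; first apply: (@core2 R _ _ _ _ (beta ^+ 2 * Mx)).
- by move=> i _; apply: mnl_ge0.
- exact: mnl_sum1.
- apply: mulr_ge0; first exact: sqr_ge0.
  rewrite /Mx; apply: (big_ind (fun x => 0 <= x)) => //.
  - by move=> x y hx hy; rewrite le_max hx.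
  - by move=> i _; apply: sqr_ge0.
- exact: hz.
rewrite mulrA lerD2r mulr_sumr; apply: ler_sum => i hi.
rewrite mulrCA ler_wpM2l ?mnl_ge0 //.
have -> : z i - \sum_(j in J) q j * z j =
   ip (phi s a i - \sum_(j in J) q j *: phi s a j) (ts - th).
  by rewrite ip_lin1 hzip; congr (_ - _); apply: eq_bigr => j _; rewrite hzip.
apply: (le_trans (cs _ _ _ _ _ hM)).
by rewrite mulrC ler_wpM2r // sqrtr_ge0.
Qed.
End S5.

Local Open Scope classical_set_scope.

Lemma le_vmax (R : realType) (S A : finType) (a0 : A) (Q : S -> A -> R) s a :
  Q s a <= vmax a0 Q s.
Proof. exact: (le_bigmax (Q s a0) (fun a => Q s a) a). Qed.

Lemma vmax_le (R : realType) (S A : finType) (a0 : A) (Q : S -> A -> R) s x :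
  (forall a, Q s a <= x) -> vmax a0 Q s <= x.
Proof. by move=> h; apply: bigmax_le => // i _; apply: h. Qed.

Lemma vmax_mono (R : realType) (S A : finType) (a0 : A) (Q1 Q2 : S -> A -> R) s :
  (forall a, Q1 s a <= Q2 s a) -> vmax a0 Q1 s <= vmax a0 Q2 s.
Proof. by move=> h; apply: vmax_le => a; apply: le_trans (h a) _; apply: le_vmax. Qed.

Theorem lemma6 (R : realType) (S A : finType) (a0 : A) (d : nat)
  (phi : S -> A -> S -> 'cV[R]_d) (Sr : S -> A -> {set S})
  (r : S -> A -> R) (gamma : R) (thetastar : 'cV[R]_d) (Ltheta : R)
  (T N : nat) (thetahat : nat -> 'cV[R]_d) (Sigma : nat -> 'M[R]_d)
  (beta : nat -> R) (tk : nat -> nat)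
  (Vstar : S -> R) (Qstar : S -> A -> R) :
  (forall s a, (0 < #|Sr s a|)%N) ->
  (forall s a, 0 <= r s a <= 1) ->
  0 < gamma < 1 ->
  Num.sqrt ((thetastar^T *m thetastar) 0 0) <= Ltheta ->
  (forall t, (1 <= t <= T)%N -> posdef (Sigma t)) ->
  (forall t, (1 <= t <= T)%N ->
     wnorm (Sigma t) (thetahat t - thetastar) <= beta t) ->
  (forall s a, Qstar s a = r s a + gamma * \sum_(s' : S) mnl phi Sr thetastar s a s' * Vstar s') ->
  (forall s, Vstar s = vmax a0 Qstar s) ->
  (forall k, (1 <= tk k <= T)%N) ->
  forall k,
    let Qk := devi Sr a0 r gamma
                (conf_set phi Sr (thetahat (tk k)) (Sigma (tk k)) (beta (tk k))) N in
    forall s a,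
      ((1 - gamma)^-1 >= vmax a0 Qk s /\ vmax a0 Qk s >= Vstar s) /\
      ((1 - gamma)^-1 >= Qk s a /\ Qk s a >= Qstar s a).
Proof.
move=> hc hr hg _ hpd hbeta hQ hV htk k Qk s a.
set P := conf_set phi Sr (thetahat (tk k)) (Sigma (tk k)) (beta (tk k)).
have hP : P (mnl phi Sr thetastar).
  by apply: mnl_in_conf => //; [apply: hpd | apply: hbeta]; apply: htk.
have Pp : forall p, P p -> (forall s a s', 0 <= p s a s') /\
    (forall s a, \sum_(s' in Sr s a) p s a s' = 1).
  move=> p [h1 h2]; split; first by move=> s0 a0' s'; case/andP: (h1 s0 a0' s').
  by move=> s0 a0'; case: (h2 s0 a0').
set eps := (1 - gamma)^-1.
have hg1 : 0 < 1 - gamma by lra.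
have heps : eps = 1 + gamma * eps by rewrite /eps; field; lra.
have heps0 : 0 <= eps by rewrite /eps invr_ge0 ltW.
have sumle : forall (p : S -> A -> S -> R) s0 a1 (f : S -> R) x, P p ->
    (forall s', f s' <= x) -> \sum_(s' in Sr s0 a1) p s0 a1 s' * f s' <= x.
  move=> p s0 a1 f x hp hf.
  apply: (le_trans (y := \sum_(s' in Sr s0 a1) p s0 a1 s' * x)).
    by apply: ler_sum => i _; rewrite ler_wpM2l //; case: (Pp p hp).
  by rewrite -mulr_suml; case: (Pp p hp) => _ ->; rewrite mul1r.
set M := \big[Num.max/Qstar s a0]_(x : S * A) Qstar x.1 x.2.
have hQM : forall s0 a1, Qstar s0 a1 <= M.
  by move=> s0 a1; apply: (le_bigmax (Qstar s a0) (fun x : S * A => Qstar x.1 x.2) (s0, a1)).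
have hVM : forall s0, Vstar s0 <= M by move=> s0; rewrite hV; apply: vmax_le.
have hQ1 : forall s0 a1, Qstar s0 a1 <= 1 + gamma * M.
  move=> s0 a1; rewrite hQ mnl_sum_all.
  apply: lerD; first by case/andP: (hr s0 a1).
  have hg0 : 0 <= gamma by case/andP: hg => /ltW.
  rewrite ler_wpM2l //; apply: sumle => //; exact: hVM.
have hMe : M <= eps.
  have : M <= 1 + gamma * M by apply: bigmax_le => // x _; apply: hQ1.
  rewrite /eps => h; rewrite -div1r ler_pdivlMr //; nra.
have main : forall n s0 a1, Qstar s0 a1 <= devi Sr a0 r gamma P n s0 a1 <= eps.
  elim=> [|n IH] s0 a1.
    by rewrite /= lexx andbT; apply: le_trans (hQM _ _) hMe.
  set Vn := vmax a0 (devi Sr a0 r gamma P n).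
  have hVn : forall s', Vstar s' <= Vn s' <= eps.
    move=> s'; apply/andP; split.
      by rewrite hV; apply: vmax_mono => a2; case/andP: (IH s' a2).
    by apply: vmax_le => a2; case/andP: (IH s' a2).
  rewrite /=.
  set X := [set x | exists2 p, P p & x = \sum_(s' in Sr s0 a1) p s0 a1 s' * Vn s'].
  have hX : X (\sum_(s' in Sr s0 a1) mnl phi Sr thetastar s0 a1 s' * Vn s').
    by exists (mnl phi Sr thetastar).
  have ubX : ubound X eps.
    by move=> x [p hp ->]; apply: sumle => // s'; case/andP: (hVn s').
  have hsup : sup X <= eps by apply: ge_sup => //; exists (\sum_(s' in Sr s0 a1) mnl phi Sr thetastar s0 a1 s' * Vn s').
  have hsup2 : \sum_(s' in Sr s0 a1) mnl phi Sr thetastar s0 a1 s' * Vn s' <= sup X.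
    by apply: ub_le_sup => //; exists eps.
  have hg0 : 0 <= gamma by case/andP: hg => /ltW.
  apply/andP; split.
    rewrite hQ mnl_sum_all; apply: lerD => //.
    rewrite ler_wpM2l //; apply: le_trans hsup2.
    apply: ler_sum => i _; rewrite ler_wpM2l ?mnl_ge0 //.
    by case/andP: (hVn i).
  rewrite [X in _ <= X]heps; apply: lerD; first by case/andP: (hr s0 a1).
  by rewrite ler_wpM2l.
have hN := main N.
split; split.
- by apply: vmax_le => a1; case/andP: (hN s a1).
- by rewrite hV; apply: vmax_mono => a1; case/andP: (hN s a1).
- by case/andP: (hN s a).
- by case/andP: (hN s a).
Qed.
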